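(* There exist constants $\rho_n$ ($n\ge0$) such that the following holds. Let $s,\delta>0$ be such that $1/s$ is an integer and $\delta<s/2$. Then there exists a $C^\infty$ diffeomorphism $A=A_{s,\delta}$ of $[0,1]$ such that: (1) $A=\mathrm{Id}+a$, where $a=a_{s,\delta}$ is a non-negative $C^\infty$ function of period $s$; (2) $A(0)=0$, $A(\delta)=s-\delta$, and $A(s)=s$; (3) $\delta/(2s)\le A'(x)\le 2s/\delta$ for all $x$; (4) for each $n\ge0$, $\|A\|_n\le\rho_n/\delta^{n^2}$, where $\rho_n$ does not depend on $\delta$ and $s$.
   Context: For a $C^n$ diffeomorphism $g$ of $[0,1]$, $\|g\|_n^*=\max|g^{(i)}(x)|$, the maximum over all $x\in[0,1]$ and $0\le i\le n$, and $\|g\|_n=\max\{\|g\|_n^*,\|g^{-1}\|_n^*\}$. *)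

(* Defs.v *)
From Stdlib Require Import Reals.
From Coquelicot Require Import Coquelicot.
Open Scope R_scope.

Definition smooth (f : R -> R) : Prop :=
  forall (n : nat) (x : R), ex_derive_n f n x.

(* g is a C^infinity diffeomorphism of [0,1] (restriction of the smooth map
   g : R -> R), with (global) smooth inverse h. *)
Definition diffeo01 (g h : R -> R) : Prop :=
  smooth g /\ smooth h /\
  (forall x, h (g x) = x) /\ (forall x, g (h x) = x) /\
  (forall x, 0 <= x <= 1 -> 0 <= g x <= 1) /\
  (forall x, 0 <= x <= 1 -> 0 <= h x <= 1).

Definition Cn_star_le (n : nat) (g : R -> R) (M : R) : Prop :=
  forall (i : nat) (x : R), (i <= n)%nat -> 0 <= x <= 1 ->
    Rabs (Derive_n g i x) <= M.

Definition Cn_le (n : nat) (g ginv : R -> R) (M : R) : Prop :=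
  Cn_star_le n g M /\ Cn_star_le n ginv M.

Definition periodic (a : R -> R) (s : R) : Prop :=
  forall x, a (x + s) = a x.

(* Main.v *)
Require Import Defs.
From Stdlib Require Import Reals Lra Lia List ZArith Ranalysis5 IndefiniteDescription.
From Coquelicot Require Import Coquelicot.
Open Scope R_scope.
Import ListNotations.

Lemma Derive_n_S f n x : Derive_n f (S n) x = Derive_n (Derive f) n x.
Proof.
  replace (S n) with (n + 1)%nat by lia.
  rewrite <- (Derive_n_comp f n 1). apply Derive_n_ext. intros; reflexivity.
Qed.

Lemma smooth_derive f : smooth f -> smooth (Derive f).
Proof.
  intros Hf n x. destruct n as [|m]. exact I.
  simpl. apply ex_derive_ext with (f := Derive_n f (S m)).
  intros t. rewrite Derive_n_S. reflexivity.
  apply (Hf (S (S m)) x).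
Qed.

Lemma exn_S F n x : (forall y, ex_derive F y) -> ex_derive_n (Derive F) n x ->
  ex_derive_n F (S n) x.
Proof.
  intros H1 H2. destruct n as [|m]. simpl. apply H1.
  simpl. simpl in H2. apply ex_derive_ext with (f := Derive_n (Derive F) m).
  intros t. rewrite <- Derive_n_S. reflexivity. exact H2.
Qed.

Lemma smooth_intro f : (forall y, ex_derive f y) -> smooth (Derive f) -> smooth f.
Proof.
  intros H1 H2 n x. destruct n. exact I. apply exn_S; auto.
Qed.

Lemma smooth_ex f : smooth f -> forall x, ex_derive f x.
Proof. intros H x. exact (H 1%nat x). Qed.

Lemma smooth_loc f n x : smooth f ->
  locally x (fun y : R => forall k, (k <= n)%nat -> ex_derive_n f k y).
Proof. intros H. apply filter_forall. intros y k _. apply H. Qed.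

Lemma smooth_ext f g : (forall x, f x = g x) -> smooth f -> smooth g.
Proof. intros E H n x. eapply ex_derive_n_ext. exact E. apply H. Qed.

Lemma smooth_const c : smooth (fun _ => c).
Proof.
  intros n; revert c; induction n; intros c x. exact I.
  apply exn_S. intros; apply ex_derive_const.
  apply ex_derive_n_ext with (f := fun _ => 0). intros t. rewrite Derive_const; auto.
  apply IHn.
Qed.

Lemma smooth_id : smooth (fun x => x).
Proof.
  apply smooth_intro. intros; apply ex_derive_id.
  eapply smooth_ext. 2: apply (smooth_const 1). intros; rewrite Derive_id; auto.
Qed.

Lemma smooth_plus f g : smooth f -> smooth g -> smooth (fun x => f x + g x).
Proof. intros Hf Hg n x. apply ex_derive_n_plus; apply smooth_loc; auto. Qed.

Lemma smooth_minus f g : smooth f -> smooth g -> smooth (fun x => f x - g x).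
Proof. intros Hf Hg n x. apply ex_derive_n_minus; apply smooth_loc; auto. Qed.

Lemma smooth_scal a f : smooth f -> smooth (fun x => a * f x).
Proof. intros Hf n x. apply ex_derive_n_scal_l; auto. Qed.

Lemma smooth_opp f : smooth f -> smooth (fun x => - f x).
Proof. intros Hf n x. apply ex_derive_n_opp; auto. Qed.

Lemma smooth_trans f b : smooth f -> smooth (fun x => f (x + b)).
Proof. intros Hf n x. apply ex_derive_n_comp_trans; auto. Qed.

Lemma smooth_cscal f a : smooth f -> smooth (fun x => f (a * x)).
Proof. intros Hf n x. apply ex_derive_n_comp_scal; apply smooth_loc; auto. Qed.

Lemma smooth_mult_aux n : forall k, (k <= n)%nat -> forall f g, smooth f -> smooth g ->
  forall x, ex_derive_n (fun x => f x * g x) k x.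
Proof.
  induction n as [|n IH]; intros k Hk f g Hf Hg x.
  - replace k with 0%nat by lia. exact I.
  - destruct k as [|k]. exact I.
    apply exn_S.
    + intros y. apply ex_derive_mult; apply smooth_ex; auto.
    + apply ex_derive_n_ext with (f := fun y => Derive f y * g y + f y * Derive g y).
      intros t. rewrite Derive_mult; auto; apply smooth_ex; auto.
      apply ex_derive_n_plus; apply filter_forall; intros y j Hj;
      apply IH; try lia; auto using smooth_derive.
Qed.

Lemma smooth_mult f g : smooth f -> smooth g -> smooth (fun x => f x * g x).
Proof. intros Hf Hg n x. eapply smooth_mult_aux; eauto. Qed.

Lemma Derive_mult_ext f g : smooth f -> smooth g -> forall t,
  Derive (fun y => f y * g y) t = Derive f t * g t + f t * Derive g t.
Proof. intros Hf Hg t. apply Derive_mult; apply smooth_ex; auto. Qed.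

Lemma prod_bound n : forall f g x A B M X Y, smooth f -> smooth g ->
  (forall j, (j <= n)%nat -> Rabs (Derive_n f j x) <= A * M ^ j * X) ->
  (forall j, (j <= n)%nat -> Rabs (Derive_n g j x) <= B * M ^ j * Y) ->
  Rabs (Derive_n (fun y => f y * g y) n x) <= 2 ^ n * A * B * M ^ n * X * Y.
Proof.
  induction n as [|n IH]; intros f g x A B M X Y Hf Hg HF HG.
  - simpl. rewrite Rabs_mult.
    specialize (HF 0%nat (le_n _)); specialize (HG 0%nat (le_n _)). simpl in *.
    replace (1 * A * B * 1 * X * Y) with ((A * 1 * X) * (B * 1 * Y)) by ring.
    apply Rmult_le_compat; auto using Rabs_pos.
  - rewrite Derive_n_S.
    rewrite (Derive_n_ext _ (fun y => Derive f y * g y + f y * Derive g y)).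
    2: apply Derive_mult_ext; auto.
    rewrite Derive_n_plus; try apply smooth_loc; try apply smooth_mult; auto using smooth_derive.
    eapply Rle_trans. apply Rabs_triang.
    assert (H1 := IH (Derive f) g x A B M (M * X) Y (smooth_derive _ Hf) Hg).
    assert (H2 := IH f (Derive g) x A B M X (M * Y) Hf (smooth_derive _ Hg)).
    refine (Rle_trans _ _ _ (Rplus_le_compat _ _ _ _ (H1 _ _) (H2 _ _)) _).
    + intros j Hj. rewrite <- Derive_n_S.
      replace (A * M ^ j * (M * X)) with (A * M ^ (S j) * X) by (simpl; ring).
      apply HF; lia.
    + intros j Hj. apply HG; lia.
    + intros j Hj. apply HF; lia.
    + intros j Hj. rewrite <- Derive_n_S.
      replace (B * M ^ j * (M * Y)) with (B * M ^ (S j) * Y) by (simpl; ring).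
      apply HG; lia.
    + simpl. right; ring.
Qed.

Lemma pow_le_mono (a : R) i j : 1 <= a -> (i <= j)%nat -> a ^ i <= a ^ j.
Proof. intros. apply Rle_pow; auto. Qed.

Lemma recip_bound k K : 0 <= K -> exists C, 1 <= C /\
  forall u r y M V R, smooth u -> smooth r ->
  (forall t, Derive r t = - (Derive u t * (r t * r t))) ->
  0 <= M -> 0 <= R -> V * R <= 2 * M ->
  (forall j, (j <= k)%nat -> Rabs (Derive_n (Derive u) j y) <= K * M ^ j * V) ->
  Rabs (r y) <= R ->
  forall j, (j <= k)%nat -> Rabs (Derive_n r j y) <= C * M ^ j * R.
Proof.
  intros HK. induction k as [|k IH].
  - exists 1. split. lra. intros u r y M V R _ _ _ HM HR _ _ Hr j Hj.
    replace j with 0%nat by lia. simpl. lra.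
  - destruct IH as [C [HC IH]].
    exists (C + 2 ^ (2 * k + 1) * K * (C * C)). split.
    { assert (0 <= 2 ^ (2 * k + 1) * K * (C * C)).
      { apply Rmult_le_pos. apply Rmult_le_pos; auto. apply pow_le; lra. nra. }
      lra. }
    intros u r y M V R Hu Hr Hd HM HR HVR HUj Hry j Hj.
    assert (HMj : forall i, 0 <= M ^ i) by (intros; apply pow_le; auto).
    assert (Hpos : 0 <= 2 ^ (2 * k + 1) * K * (C * C)).
    { apply Rmult_le_pos. apply Rmult_le_pos; auto. apply pow_le; lra. nra. }
    assert (Hlow : forall i, (i <= k)%nat -> Rabs (Derive_n r i y) <= C * M ^ i * R).
    { intros i Hi. apply (IH u r y M V R); auto. }
    destruct (Compare_dec.le_lt_dec j k) as [Hjk|Hjk].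
    + eapply Rle_trans. apply Hlow; auto.
      assert (0 <= M ^ j * R) by (apply Rmult_le_pos; auto).
      nra.
    + replace j with (S k) by lia. rewrite Derive_n_S.
      rewrite (Derive_n_ext _ (fun t => - (Derive u t * (r t * r t)))) by apply Hd.
      rewrite Derive_n_opp, Rabs_Ropp.
      assert (Hrr : forall i, (i <= k)%nat -> Rabs (Derive_n (fun t => r t * r t) i y)
                 <= (2 ^ k * C * C) * M ^ i * (R * R)).
      { intros i Hi. eapply Rle_trans. apply (prod_bound i r r y C C M R R); auto.
        intros; apply Hlow; lia. intros; apply Hlow; lia.
        assert (2 ^ i <= 2 ^ k) by (apply pow_le_mono; lra || lia).
        assert (0 <= C * C * M ^ i * R * R).
        { repeat apply Rmult_le_pos; auto; lra. }
        nra. }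
      eapply Rle_trans.
      apply (prod_bound k (Derive u) (fun t => r t * r t) y K (2 ^ k * C * C) M V (R * R));
        auto using smooth_derive, smooth_mult.
      assert (HV : 0 <= K * V).
      { specialize (HUj 0%nat (Nat.le_0_l _)). simpl in HUj.
        assert (0 <= Rabs (Derive u y)) by apply Rabs_pos. nra. }
      replace (2 ^ k * K * (2 ^ k * C * C) * M ^ k * V * (R * R))
        with ((2 ^ k * 2 ^ k * K * (C * C) * M ^ k * R) * (V * R)) by ring.
      replace (2 ^ (2 * k + 1)) with (2 ^ k * 2 ^ k * 2).
      2:{ rewrite pow_add. replace (2*k)%nat with (k+k)%nat by lia. rewrite pow_add. simpl. ring. }
      assert (0 <= 2 ^ k * 2 ^ k * K * (C * C) * M ^ k * R).
      { repeat apply Rmult_le_pos; auto; try apply pow_le; try lra; nra. }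
      simpl pow at 3.
      assert (0 <= C * M ^ S k * R) by (apply Rmult_le_pos; [apply Rmult_le_pos|]; auto; lra).
      eapply Rle_trans. apply Rmult_le_compat_l. auto. apply HVR.
      replace ((C + 2 ^ k * 2 ^ k * 2 * K * (C * C)) * M ^ S k * R) with
        (C * M ^ S k * R + 2 ^ k * 2 ^ k * K * (C * C) * M ^ k * R * (2 * M)) by (simpl; ring).
      lra.
Qed.

Definition sm n f := forall k, (k <= n)%nat -> forall x, ex_derive_n f k x.

Lemma sm_weak n m f : (m <= n)%nat -> sm n f -> sm m f.
Proof. intros H1 H2 k Hk. apply H2. lia. Qed.

Lemma sm_derive n f : sm (S n) f -> sm n (Derive f).
Proof.
  intros H k Hk x. destruct k as [|m]. exact I.
  simpl. apply ex_derive_ext with (f := Derive_n f (S m)).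
  intros t. rewrite Derive_n_S. reflexivity.
  apply (H (S (S m))). lia.
Qed.

Lemma sm_ex n f : sm (S n) f -> forall x, ex_derive f x.
Proof. intros H x. apply (H 1%nat). lia. Qed.

Lemma sm_loc n f x : sm n f ->
  locally x (fun y : R => forall k, (k <= n)%nat -> ex_derive_n f k y).
Proof. intros H. apply filter_forall. intros y k Hk. apply H; auto. Qed.

Lemma sm_mult n : forall f g, sm n f -> sm n g -> sm n (fun x => f x * g x).
Proof.
  induction n as [|n IH]; intros f g Hf Hg k Hk x.
  - replace k with 0%nat by lia. exact I.
  - destruct k as [|k]. exact I.
    apply exn_S.
    + intros y. apply ex_derive_mult; eapply sm_ex; eauto.
    + apply ex_derive_n_ext with (f := fun y => Derive f y * g y + f y * Derive g y).
      intros t. rewrite Derive_mult; auto; eapply sm_ex; eauto.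
      apply ex_derive_n_plus; apply sm_loc; apply (sm_weak n); try lia;
      apply IH; auto using sm_derive.
      all: try (eapply sm_weak; [|eassumption]; lia).
Qed.

Lemma sm_opp n f : sm n f -> sm n (fun x => - f x).
Proof. intros H k Hk x. apply ex_derive_n_opp. auto. Qed.

Lemma sm_inv n : forall u, (forall x, u x <> 0) -> sm n u -> sm n (fun x => / u x).
Proof.
  induction n as [|n IH]; intros u Hu H k Hk x.
  - replace k with 0%nat by lia. exact I.
  - destruct k as [|k]. exact I.
    apply exn_S.
    + intros y. apply ex_derive_inv; auto. eapply sm_ex; eauto.
    + apply ex_derive_n_ext with (f := fun y => - (Derive u y * ((/ u y) * (/ u y)))).
      intros t. rewrite Derive_inv; auto. field. auto. eapply sm_ex; eauto.
      apply (sm_opp n). apply sm_mult. apply sm_derive; auto.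
      apply sm_mult; apply IH; auto; (eapply sm_weak; [|eassumption]; lia).
      lia.
Qed.

Lemma smooth_sm f : smooth f <-> forall n, sm n f.
Proof. split. intros H n k _ x. apply H. intros H n x. apply (H n n). lia. Qed.

Lemma smooth_inv u : (forall x, u x <> 0) -> smooth u -> smooth (fun x => / u x).
Proof. intros H1 H2. apply smooth_sm. intros n. apply sm_inv; auto. apply smooth_sm; auto. Qed.

Fixpoint peval (l : list R) (y : R) : R :=
  match l with nil => 0 | c :: l' => c + y * peval l' y end.

Fixpoint padd (a b : list R) : list R :=
  match a, b with
  | nil, _ => b
  | _, nil => a
  | x :: a', y :: b' => (x + y) :: padd a' b'
  end.

Fixpoint pder (l : list R) : list R :=
  match l with nil => nil | c :: l' => padd l' (0 :: pder l') end.

Definition popp (l : list R) := map Ropp l.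

Lemma peval_padd a b y : peval (padd a b) y = peval a y + peval b y.
Proof.
  revert b; induction a as [|x a IH]; intros [|z b]; simpl; try ring.
  rewrite IH. ring.
Qed.

Lemma peval_popp a y : peval (popp a) y = - peval a y.
Proof. induction a; simpl; [ring|]. rewrite IHa; ring. Qed.

Lemma peval_der l y : is_derive (peval l) y (peval (pder l) y).
Proof.
  apply is_derive_Reals.
  induction l as [|c l IH]; simpl.
  - apply derivable_pt_lim_const.
  - rewrite peval_padd. simpl.
    replace (peval l y + (0 + y * peval (pder l) y)) with (0 + (1 * peval l y + y * peval (pder l) y)) by ring.
    apply (derivable_pt_lim_plus (fun _ => c) (fun t => t * peval l t)).
    apply derivable_pt_lim_const.
    apply (derivable_pt_lim_mult (fun t => t) (peval l)). apply derivable_pt_lim_id. auto.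
Qed.

Fixpoint pabs (l : list R) : R := match l with nil => 0 | c :: l' => Rabs c + pabs l' end.

Lemma pabs_pos l : 0 <= pabs l.
Proof. induction l; simpl. lra. assert (0 <= Rabs a) by apply Rabs_pos. lra. Qed.

Lemma peval_bound l y : 1 <= y -> Rabs (peval l y) <= pabs l * y ^ length l.
Proof.
  intros Hy. induction l as [|c l IH]; simpl. rewrite Rabs_R0. lra.
  eapply Rle_trans. apply Rabs_triang. rewrite Rabs_mult, (Rabs_right y) by lra.
  assert (1 <= y ^ length l) by (apply pow_R1_Rle; lra).
  assert (0 <= pabs l) by apply pabs_pos.
  assert (1 <= y * y ^ length l) by nra.
  assert (Rabs c <= Rabs c * (y * y ^ length l)) by (assert (0 <= Rabs c) by apply Rabs_pos; nra).
  assert (y * (pabs l * y ^ length l) = pabs l * (y * y ^ length l)) by ring.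
  assert (Rabs (peval l y) * y <= pabs l * y ^ length l * y) by (apply Rmult_le_compat_r; lra).
  nra.
Qed.

Definition E (x : R) : R := if Rlt_dec 0 x then exp (- / x) else 0.

Fixpoint PE (n : nat) : list R :=
  match n with O => [1] | S n => 0 :: 0 :: padd (PE n) (popp (pder (PE n))) end.

Definition FE n x := peval (PE n) (/ x) * exp (- / x).

Lemma FE_der n x : 0 < x -> is_derive (FE n) x (FE (S n) x).
Proof.
  intros Hx. unfold FE. apply is_derive_Reals.
  assert (Hp := proj1 (is_derive_Reals _ _ _) (peval_der (PE n) (/ x))).
  assert (Hi : derivable_pt_lim (fun t => / t) x (- (1) / x ^ 2)).
  { apply is_derive_Reals.
    assert (H := is_derive_inv (fun t => t) x 1 (is_derive_id x)).
    apply H. simpl; lra. }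
  assert (H1 : derivable_pt_lim (fun t => peval (PE n) (/ t)) x
               (peval (pder (PE n)) (/ x) * (- (1) / x ^ 2))).
  { apply (derivable_pt_lim_comp (fun t => / t) (peval (PE n))); auto. }
  assert (H2 : derivable_pt_lim (fun t => exp (- / t)) x
               (exp (- / x) * (- (- (1) / x ^ 2)))).
  { apply (derivable_pt_lim_comp (fun t => - / t) exp).
    apply (derivable_pt_lim_opp (fun t => / t)); auto.
    apply is_derive_Reals, is_derive_exp. }
  assert (H3 := derivable_pt_lim_mult _ _ _ _ _ H1 H2).
  simpl. rewrite peval_padd, peval_popp.
  match goal with |- derivable_pt_lim _ _ ?v =>
    replace v with (peval (pder (PE n)) (/ x) * (- (1) / x ^ 2) * exp (- / x) +
      peval (PE n) (/ x) * (exp (- / x) * - (- (1) / x ^ 2))) end.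
  exact H3.
  field. lra.
Qed.

Lemma E_pos x : 0 < x -> E x = exp (- / x).
Proof. intros H. unfold E. destruct (Rlt_dec 0 x); [auto|lra]. Qed.
Lemma E_npos x : x <= 0 -> E x = 0.
Proof. intros H. unfold E. destruct (Rlt_dec 0 x); [lra|auto]. Qed.
Lemma E_ge0 x : 0 <= E x.
Proof. unfold E. destruct (Rlt_dec 0 x). left; apply exp_pos. lra. Qed.
Lemma E_gt0 x : 0 < x -> 0 < E x.
Proof. intros H. rewrite E_pos; auto. apply exp_pos. Qed.

Lemma DE_pos n x : 0 < x -> Derive_n E n x = FE n x.
Proof.
  revert x; induction n as [|n IH]; intros x Hx.
  - simpl. rewrite E_pos; auto. unfold FE. simpl. ring.
  - simpl. rewrite (Derive_ext_loc _ (FE n)).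
    apply is_derive_unique, FE_der; auto.
    apply (locally_interval _ x 0 p_infty); simpl; auto.
Qed.

Lemma DE_neg n x : x < 0 -> Derive_n E n x = 0.
Proof.
  revert x; induction n as [|n IH]; intros x Hx.
  - simpl. apply E_npos; lra.
  - simpl. rewrite (Derive_ext_loc _ (fun _ => 0)).
    apply Derive_const.
    apply (locally_interval _ x m_infty 0); simpl; auto.
Qed.

Lemma sum_ge_term f k : (forall i, 0 <= f i) -> f k <= sum_f_R0 f k.
Proof.
  intros H. destruct k. simpl; lra.
  simpl. assert (0 <= sum_f_R0 f k) by (apply cond_pos_sum; auto). lra.
Qed.

Lemma exp_ge_pow y k : 0 <= y -> y ^ k / INR (Factorial.fact k) <= exp y.
Proof.
  intros Hy. eapply Rle_trans. 2: apply exp_ge_taylor; auto.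
  apply (sum_ge_term (fun i => y ^ i / INR (Factorial.fact i))).
  intros i. apply Rmult_le_pos. apply pow_le; auto.
  left. apply Rinv_0_lt_compat, INR_fact_lt_0.
Qed.

Lemma FE_small n : exists K, 0 <= K /\ forall h, 0 < h <= 1 -> Rabs (FE n h) <= K * (h * h).
Proof.
  set (l := PE n). set (m := length l).
  exists (pabs l * INR (Factorial.fact (m + 2))). split.
  { apply Rmult_le_pos. apply pabs_pos. apply pos_INR. }
  intros h Hh. unfold FE. fold l.
  set (y := / h).
  assert (Hy : 1 <= y). { unfold y. rewrite <- Rinv_1. apply Rinv_le_contravar; lra. }
  assert (Hhy : h = / y). { unfold y. rewrite Rinv_inv. auto. }
  rewrite Rabs_mult, (Rabs_right (exp _)) by (left; apply exp_pos).
  assert (Hb := peval_bound l y Hy). fold m in Hb.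
  assert (He := exp_ge_pow y (m + 2) ltac:(lra)).
  assert (Hf : 0 < INR (Factorial.fact (m + 2))) by apply INR_fact_lt_0.
  assert (Hym : 0 < y ^ m) by (apply pow_lt; lra).
  assert (Hexp : exp (- y) <= INR (Factorial.fact (m + 2)) / y ^ (m + 2)).
  { rewrite exp_Ropp. assert (0 < exp y) by apply exp_pos.
    assert (0 < y ^ (m + 2)) by (apply pow_lt; lra).
    apply (Rmult_le_reg_r (exp y * y ^ (m+2))). nra.
    field_simplify; try lra.
    apply (Rmult_le_reg_r (/ INR (Factorial.fact (m+2)))). apply Rinv_0_lt_compat; lra.
    field_simplify; lra. }
  rewrite pow_add in Hexp. simpl in Hexp.
  rewrite Hhy.
  assert (0 <= pabs l) by apply pabs_pos.
  assert (0 <= exp (- y)) by (left; apply exp_pos).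
  eapply Rle_trans. apply Rmult_le_compat_r. auto. apply Hb.
  eapply Rle_trans. apply Rmult_le_compat_l. apply Rmult_le_pos; auto; lra. apply Hexp.
  right. field. split; lra.
Qed.

Lemma isd_const (c x : R) : is_derive (fun _ => c) x 0.
Proof. apply is_derive_Reals, derivable_pt_lim_const. Qed.

Lemma DE_flat n : Derive_n E n 0 = 0 -> is_derive (Derive_n E n) 0 0.
Proof.
  intros H0. apply is_derive_Reals. intros eps Heps.
  destruct (FE_small n) as [K [HK HKb]].
  assert (Hd : 0 < Rmin 1 (eps / (K + 1))).
  { apply Rmin_pos. lra. apply Rdiv_lt_0_compat; lra. }
  exists (mkposreal _ Hd). intros h Hh Hlt. simpl in Hlt.
  rewrite Rplus_0_l, H0. unfold Rminus. rewrite Ropp_0, !Rplus_0_r.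
  assert (Hm1 := Rmin_l 1 (eps / (K + 1))). assert (Hm2 := Rmin_r 1 (eps / (K + 1))).
  destruct (Rlt_dec 0 h) as [Hp|Hn].
  - rewrite DE_pos by auto. rewrite Rabs_right in Hlt by lra.
    assert (Hb := HKb h ltac:(lra)).
    unfold Rdiv. rewrite Rabs_mult, Rabs_inv, (Rabs_right h) by lra.
    apply (Rmult_lt_reg_r h). lra. rewrite Rmult_assoc, Rinv_l by lra.
    assert (h < eps / (K + 1)) by lra.
    assert (K * h <= K * (eps / (K+1))) by (apply Rmult_le_compat_l; lra).
    assert (K * (eps / (K + 1)) < eps).
    { apply (Rmult_lt_reg_r (K+1)). lra. field_simplify; lra. }
    nra.
  - rewrite DE_neg by lra. unfold Rdiv. rewrite Rmult_0_l, Rabs_R0. auto.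
Qed.

Lemma DE_zero n : Derive_n E n 0 = 0.
Proof.
  induction n. simpl. apply E_npos; lra.
  simpl. apply is_derive_unique. apply DE_flat; auto.
Qed.

Lemma E_smooth : smooth E.
Proof.
  intros n x. destruct n as [|n]. exact I. simpl.
  destruct (Rtotal_order x 0) as [Hx|[Hx|Hx]].
  - exists 0. apply (is_derive_ext_loc (fun _ => 0)).
    apply (locally_interval _ x m_infty 0); simpl; auto.
    intros y _ Hy. rewrite DE_neg; auto. apply isd_const.
  - subst x. exists 0. apply DE_flat, DE_zero.
  - exists (FE (S n) x). apply (is_derive_ext_loc (FE n)).
    apply (locally_interval _ x 0 p_infty); simpl; auto.
    intros y Hy _. rewrite DE_pos; auto. apply FE_der; auto.
Qed.

Definition St (x : R) : R := E x * / (E x + E (1 - x)).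

Lemma den_pos x : 0 < E x + E (1 - x).
Proof.
  destruct (Rlt_dec 0 x). assert (H := E_gt0 x r). assert (H2 := E_ge0 (1 - x)). lra.
  assert (H := E_gt0 (1 - x) ltac:(lra)). assert (H2 := E_ge0 x). lra.
Qed.

Lemma E1_smooth : smooth (fun x => E (1 - x)).
Proof.
  apply smooth_ext with (f := fun x => (fun y => E (-1 * y)) (x + -1)).
  intros x. f_equal. ring.
  apply (smooth_trans (fun y => E (-1 * y)) (-1)). apply (smooth_cscal E). apply E_smooth.
Qed.

Lemma St_smooth : smooth St.
Proof.
  unfold St. apply smooth_mult. apply E_smooth.
  apply smooth_inv. intros x; assert (H := den_pos x); lra.
  apply smooth_plus. apply E_smooth. apply E1_smooth.
Qed.

Lemma St_0 x : x <= 0 -> St x = 0.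
Proof. intros H. unfold St. rewrite E_npos by auto. ring. Qed.

Lemma St_1 x : 1 <= x -> St x = 1.
Proof.
  intros H. unfold St. rewrite (E_npos (1 - x)) by lra. rewrite Rplus_0_r.
  field. assert (H1 := E_gt0 x ltac:(lra)). lra.
Qed.

Lemma St_range x : 0 <= St x <= 1.
Proof.
  unfold St. assert (H := den_pos x). assert (H1 := E_ge0 x). assert (H2 := E_ge0 (1 - x)).
  split. apply Rmult_le_pos; auto. left; apply Rinv_0_lt_compat; auto.
  apply (Rmult_le_reg_r (E x + E (1 - x))); auto. rewrite Rmult_assoc, Rinv_l by lra. lra.
Qed.

Lemma Derive_n_const_all k (c x : R) : (1 <= k)%nat -> Derive_n (fun _ => c) k x = 0.
Proof. intros H. destruct k. lia. apply Derive_n_const. Qed.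

Lemma St_bound1 k : exists M, 0 <= M /\ forall x, Rabs (Derive_n St k x) <= M.
Proof.
  assert (Hc : forall c, 0 <= c <= 1 -> continuity_pt (fun x => Rabs (Derive_n St k x)) c).
  { intros c _. apply (continuity_pt_comp (Derive_n St k) Rabs).
    apply continuity_pt_filterlim. apply (ex_derive_continuous (Derive_n St k) c). apply (St_smooth (S k)).
    apply Rcontinuity_abs. }
  destruct (continuity_ab_maj _ 0 1 ltac:(lra) Hc) as [Mx [HM _]].
  exists (Rmax 1 (Rabs (Derive_n St k Mx))). split.
  { eapply Rle_trans. 2: apply Rmax_l. lra. }
  intros x. destruct (Rle_dec 0 x) as [H0|H0]; [destruct (Rle_dec x 1) as [H1|H1]|].
  - eapply Rle_trans. apply HM; lra. apply Rmax_r.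
  - destruct k as [|k].
    + simpl. rewrite St_1 by lra. rewrite Rabs_R1. apply Rmax_l.
    + rewrite (Derive_n_ext_loc _ (fun _ => 1)). rewrite Derive_n_const, Rabs_R0.
      eapply Rle_trans. 2: apply Rmax_l. lra.
      apply (locally_interval _ x 1 p_infty); simpl; auto; try lra.
      intros y Hy _. apply St_1; lra.
  - rewrite (Derive_n_ext_loc _ (fun _ => 0)).
    destruct k. simpl. rewrite Rabs_R0. eapply Rle_trans. 2: apply Rmax_l. lra.
    rewrite Derive_n_const, Rabs_R0.
    eapply Rle_trans. 2: apply Rmax_l. lra.
    apply (locally_interval _ x m_infty 0); simpl; auto; try lra.
    intros y _ Hy. apply St_0; lra.
Qed.

Lemma St_bound k : exists M, 1 <= M /\ forall j x, (j <= k)%nat -> Rabs (Derive_n St j x) <= M.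
Proof.
  induction k as [|k [M [HM IH]]].
  - destruct (St_bound1 0) as [M [HM H]]. exists (Rmax 1 M). split. apply Rmax_l.
    intros j x Hj. replace j with 0%nat by lia. eapply Rle_trans. apply H. apply Rmax_r.
  - destruct (St_bound1 (S k)) as [M' [HM' H]]. exists (Rmax M M'). split.
    eapply Rle_trans. apply HM. apply Rmax_l.
    intros j x Hj. destruct (Nat.eq_dec j (S k)). subst. eapply Rle_trans. apply H. apply Rmax_r.
    eapply Rle_trans. apply IH. lia. apply Rmax_l.
Qed.

Definition per (s e : R) (B : R -> R) (x : R) := B (x - s * IZR (Zfloor ((x - e) / s))).

Lemma div_lt s a v : 0 < s -> (a / s < v <-> a < s * v).
Proof.
  intros Hs. split; intros H.
  - apply (Rmult_lt_compat_l s) in H; auto. replace (s * (a / s)) with a in H by (field; lra). auto.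
  - apply (Rmult_lt_reg_l s); auto. replace (s * (a / s)) with a by (field; lra). auto.
Qed.
Lemma div_le s a v : 0 < s -> (v <= a / s <-> s * v <= a).
Proof.
  intros Hs. split; intros H.
  - apply (Rmult_le_compat_l s) in H; try lra. replace (s * (a / s)) with a in H by (field; lra). auto.
  - apply (Rmult_le_reg_l s); auto. replace (s * (a / s)) with a by (field; lra). auto.
Qed.

Lemma floor_spec s e t : 0 < s ->
  s * IZR (Zfloor ((t - e) / s)) <= t - e < s * IZR (Zfloor ((t - e) / s)) + s.
Proof.
  intros Hs. destruct (Zfloor_bound ((t - e) / s)) as [H1 H2].
  apply div_le in H1; auto. apply div_lt in H2; auto. lra.
Qed.

Lemma per_rep0 s e c0 d0 B x t : 0 < s -> e < c0 -> c0 <= d0 -> d0 < e + s ->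
  (forall z, z <= c0 -> B z = 0) -> (forall z, d0 <= z -> B z = 0) ->
  let k := Zfloor ((x - e) / s) in
  d0 + s * (IZR k - 1) < t -> t < e + s * (IZR k + 1) ->
  per s e B t = B (t - s * IZR k).
Proof.
  intros Hs H1 H2 H3 HB1 HB2 k Ht1 Ht2.
  assert (Hx := floor_spec s e x Hs). fold k in Hx. unfold per.
  set (k' := Zfloor ((t - e) / s)).
  assert (Ht := floor_spec s e t Hs). fold k' in Ht.
  assert (Hk1 : (k' <= k)%Z).
  { assert (IZR k' < IZR k + 1) by (apply (Rmult_lt_reg_l s); lra). rewrite <- plus_IZR in H. apply lt_IZR in H. lia. }
  assert (Hk2 : (k - 1 <= k')%Z).
  { assert (IZR k - 2 < IZR k') by (apply (Rmult_lt_reg_l s); lra). 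
    assert (IZR (k - 2) < IZR k') by (rewrite !minus_IZR; lra).
    apply lt_IZR in H0. lia. }
  destruct (Z.eq_dec k' k) as [E1|E1]. rewrite E1; auto.
  assert (E2 : k' = (k - 1)%Z) by lia. rewrite E2, minus_IZR.
  rewrite HB2, HB1; auto.
  - rewrite E2, minus_IZR in Ht. lra.
  - lra.
Qed.

Lemma per_rep s e c0 d0 B x : 0 < s -> e < c0 -> c0 <= d0 -> d0 < e + s ->
  (forall z, z <= c0 -> B z = 0) -> (forall z, d0 <= z -> B z = 0) ->
  exists k, locally x (fun t => per s e B t = B (t - s * IZR k)).
Proof.
  intros Hs H1 H2 H3 HB1 HB2.
  set (k := Zfloor ((x - e) / s)). exists k.
  assert (Hx := floor_spec s e x Hs). fold k in Hx.
  apply (locally_interval _ x (d0 + s * (IZR k - 1)) (e + s * (IZR k + 1))); simpl.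
  lra. lra.
  intros t Ht1 Ht2. eapply per_rep0; eauto.
Qed.

Lemma per_periodic s e B x : 0 < s -> per s e B (x + s) = per s e B x.
Proof.
  intros Hs. unfold per.
  replace ((x + s - e) / s) with ((x - e) / s + IZR 1) by (simpl; field; lra).
  rewrite Zfloor_addz, plus_IZR. f_equal. simpl. ring.
Qed.

Lemma per_id s e c0 d0 B x : 0 < s -> e < 0 -> 0 <= c0 -> c0 <= d0 -> d0 < e + s ->
  (forall z, z <= c0 -> B z = 0) -> (forall z, d0 <= z -> B z = 0) ->
  0 <= x <= s -> per s e B x = B x.
Proof.
  intros Hs He Hc Hcd Hd HB1 HB2 Hx. unfold per.
  destruct (Rlt_dec x (e + s)).
  - rewrite (Zfloor_eq 0). simpl. f_equal. ring.
    split. apply div_le; lra. apply div_lt; lra.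
  - apply Rnot_lt_le in n. rewrite (Zfloor_eq 1). simpl. rewrite HB1, HB2; auto; lra.
    split. apply div_le; simpl; lra. apply div_lt; simpl; lra.
Qed.

Lemma per_smooth s e c0 d0 B : 0 < s -> e < c0 -> c0 <= d0 -> d0 < e + s ->
  (forall z, z <= c0 -> B z = 0) -> (forall z, d0 <= z -> B z = 0) ->
  smooth B -> smooth (per s e B).
Proof.
  intros Hs H1 H2 H3 HB1 HB2 HB n x.
  destruct (per_rep s e c0 d0 B x) as [k Hk]; auto.
  eapply ex_derive_n_ext_loc.
  2: apply (smooth_trans B (- (s * IZR k))); auto.
  eapply filter_imp. 2: exact Hk. intros t Ht. simpl. rewrite Ht. f_equal.
Qed.

Lemma per_deriv s e c0 d0 B : 0 < s -> e < c0 -> c0 <= d0 -> d0 < e + s ->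
  (forall z, z <= c0 -> B z = 0) -> (forall z, d0 <= z -> B z = 0) ->
  forall x, exists z, forall n, Derive_n (per s e B) n x = Derive_n B n z.
Proof.
  intros Hs H1 H2 H3 HB1 HB2 x.
  destruct (per_rep s e c0 d0 B x) as [k Hk]; auto.
  exists (x + - (s * IZR k)). intros n.
  rewrite (Derive_n_ext_loc _ (fun t => B (t + - (s * IZR k)))).
  apply Derive_n_comp_trans.
  eapply filter_imp. 2: exact Hk. intros t Ht. simpl. rewrite Ht. f_equal.
Qed.


Definition PL (w c d : R) (y : R) := St ((y - c) / w) * St ((d - y) / w).

Lemma aff_smooth (f : R -> R) a b : smooth f -> smooth (fun y => f (a * y + b)).
Proof.
  intros H. apply (smooth_cscal (fun z => f (z + b)) a). apply smooth_trans; auto.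
Qed.

Lemma aff_deriv (f : R -> R) a b n y : smooth f ->
  Derive_n (fun y => f (a * y + b)) n y = a ^ n * Derive_n f n (a * y + b).
Proof.
  intros H. rewrite (Derive_n_comp_scal (fun z => f (z + b)) a n y).
  rewrite Derive_n_comp_trans. auto.
  apply smooth_loc. apply smooth_trans; auto.
Qed.

Lemma PL_ext1 w c y : 0 < w -> St ((y - c) / w) = St (/ w * y + - c / w).
Proof. intros. f_equal. field. lra. Qed.
Lemma PL_ext2 w d y : 0 < w -> St ((d - y) / w) = St (- / w * y + d / w).
Proof. intros. f_equal. field. lra. Qed.

Lemma PL_smooth w c d : 0 < w -> smooth (PL w c d).
Proof.
  intros Hw. unfold PL. apply smooth_mult.
  - eapply smooth_ext. intros y; symmetry; apply PL_ext1; auto. apply aff_smooth, St_smooth.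
  - eapply smooth_ext. intros y; symmetry; apply PL_ext2; auto. apply aff_smooth, St_smooth.
Qed.

Lemma PL_lo w c d z : 0 < w -> z <= c -> PL w c d z = 0.
Proof. intros Hw H. unfold PL. rewrite St_0. ring. apply Rmult_le_reg_r with w; auto.
  unfold Rdiv. rewrite Rmult_assoc, Rinv_l; lra. Qed.

Lemma PL_hi w c d z : 0 < w -> d <= z -> PL w c d z = 0.
Proof. intros Hw H. unfold PL. rewrite (St_0 ((d - z) / w)). ring. apply Rmult_le_reg_r with w; auto.
  unfold Rdiv. rewrite Rmult_assoc, Rinv_l; lra. Qed.

Lemma PL_range w c d z : 0 <= PL w c d z <= 1.
Proof.
  unfold PL. destruct (St_range ((z - c) / w)), (St_range ((d - z) / w)).
  split. apply Rmult_le_pos; auto. nra.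
Qed.

Lemma PL_one w c d z : 0 < w -> c + w <= z -> z <= d - w -> PL w c d z = 1.
Proof.
  intros Hw H1 H2. unfold PL. rewrite !St_1. ring.
  apply Rmult_le_reg_r with w; auto. unfold Rdiv. rewrite Rmult_assoc, Rinv_l; lra.
  apply Rmult_le_reg_r with w; auto. unfold Rdiv. rewrite Rmult_assoc, Rinv_l; lra.
Qed.

Lemma PL_bound n : exists C, 0 <= C /\ forall w c d z j, 0 < w -> (j <= n)%nat ->
  Rabs (Derive_n (PL w c d) j z) <= C * (/ w) ^ j.
Proof.
  destruct (St_bound n) as [M [HM HMb]].
  exists (2 ^ n * M * M). split. { apply Rmult_le_pos. apply Rmult_le_pos. apply pow_le; lra. lra. lra. }
  intros w c d z j Hw Hj. unfold PL.
  eapply Rle_trans.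
  apply (prod_bound j _ _ z M M (/ w) 1 1).
  - eapply smooth_ext. intros y; symmetry; apply PL_ext1; auto. apply aff_smooth, St_smooth.
  - eapply smooth_ext. intros y; symmetry; apply PL_ext2; auto. apply aff_smooth, St_smooth.
  - intros i Hi. rewrite (Derive_n_ext _ (fun y => St (/ w * y + - c / w))).
    2: intros; apply PL_ext1; auto.
    rewrite aff_deriv by apply St_smooth. rewrite Rabs_mult, <- RPow_abs, Rabs_right.
    2: left; apply Rinv_0_lt_compat; auto.
    assert (0 <= (/ w) ^ i) by (apply pow_le; left; apply Rinv_0_lt_compat; auto).
    assert (Rabs (Derive_n St i (/ w * z + - c / w)) <= M) by (apply HMb; lia).
    nra.
  - intros i Hi. rewrite (Derive_n_ext _ (fun y => St (- / w * y + d / w))).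
    2: intros; apply PL_ext2; auto.
    rewrite aff_deriv by apply St_smooth. rewrite Rabs_mult, <- RPow_abs, Rabs_Ropp, Rabs_right.
    2: left; apply Rinv_0_lt_compat; auto.
    assert (0 <= (/ w) ^ i) by (apply pow_le; left; apply Rinv_0_lt_compat; auto).
    assert (Rabs (Derive_n St i (- / w * z + d / w)) <= M) by (apply HMb; lia).
    nra.
  - assert (2 ^ j <= 2 ^ n) by (apply Rle_pow; lra || lia).
    assert (0 <= (/ w) ^ j) by (apply pow_le; left; apply Rinv_0_lt_compat; auto).
    assert (0 <= M * M * (/ w) ^ j) by (apply Rmult_le_pos; nra).
    replace (2 ^ j * M * M * (/ w) ^ j * 1 * 1) with (2 ^ j * (M * M * (/ w) ^ j)) by ring.
    replace (2 ^ n * M * M * (/ w) ^ j) with (2 ^ n * (M * M * (/ w) ^ j)) by ring.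
    apply Rmult_le_compat_r; auto.
Qed.

Definition Bp (d : R) := PL (d/8) 0 d.
Definition Bq (s d : R) := PL (d/8) (d + d/8) (s - d/8).
Definition pp s d := per s (-d/16) (Bp d).
Definition qq s d := per s (-d/16) (Bq s d).
Definition PP s d := RInt (pp s d) 0 d.
Definition QQ s d := RInt (qq s d) d s.
Definition al s d := (s - 2*d) / PP s d.
Definition be s d := (s - 2*d) / QQ s d.
Definition gg s d x := al s d * pp s d x - be s d * qq s d x.
Definition aa s d x := RInt (gg s d) 0 x.
Definition AA s d x := x + aa s d x.
Definition uu s d x := 1 + gg s d x.

Definition Hyp s d := 0 < d /\ d < s / 2.

Lemma Bp_lo d z : 0 < d -> z <= 0 -> Bp d z = 0.
Proof. intros. apply PL_lo; lra. Qed.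
Lemma Bp_hi d z : 0 < d -> d <= z -> Bp d z = 0.
Proof. intros. apply PL_hi; lra. Qed.
Lemma Bq_lo s d z : 0 < d -> z <= d + d/8 -> Bq s d z = 0.
Proof. intros. apply PL_lo; lra. Qed.
Lemma Bq_hi s d z : 0 < d -> s - d/8 <= z -> Bq s d z = 0.
Proof. intros. apply PL_hi; lra. Qed.

Ltac hyp_tac := unfold Hyp in *; lra.

Lemma pp_smooth s d : Hyp s d -> smooth (pp s d).
Proof.
  intros H. apply (per_smooth s _ 0 d). 1-4: hyp_tac.
  intros; apply Bp_lo; hyp_tac. intros; apply Bp_hi; hyp_tac.
  apply PL_smooth; hyp_tac.
Qed.

Lemma qq_smooth s d : Hyp s d -> smooth (qq s d).
Proof.
  intros H. apply (per_smooth s _ (d + d/8) (s - d/8)). 1-4: hyp_tac.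
  intros; apply Bq_lo; hyp_tac. intros; apply Bq_hi; hyp_tac.
  apply PL_smooth; hyp_tac.
Qed.

Lemma pp_range s d x : 0 <= pp s d x <= 1.
Proof. apply PL_range. Qed.
Lemma qq_range s d x : 0 <= qq s d x <= 1.
Proof. apply PL_range. Qed.

Lemma pp_id s d x : Hyp s d -> 0 <= x <= s -> pp s d x = Bp d x.
Proof.
  intros H Hx. apply (per_id s _ 0 d); try hyp_tac.
  intros; apply Bp_lo; hyp_tac. intros; apply Bp_hi; hyp_tac.
Qed.
Lemma qq_id s d x : Hyp s d -> 0 <= x <= s -> qq s d x = Bq s d x.
Proof.
  intros H Hx. apply (per_id s _ (d + d/8) (s - d/8)); try hyp_tac.
  intros; apply Bq_lo; hyp_tac. intros; apply Bq_hi; hyp_tac.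
Qed.

Lemma pp_zero s d x : Hyp s d -> d <= x <= s -> pp s d x = 0.
Proof. intros H Hx. rewrite pp_id by hyp_tac. apply Bp_hi; hyp_tac. Qed.
Lemma qq_zero s d x : Hyp s d -> 0 <= x <= d + d/8 -> qq s d x = 0.
Proof. intros H Hx. rewrite qq_id by hyp_tac. apply Bq_lo; hyp_tac. Qed.

Lemma smooth_cont f x : smooth f -> continuous f x.
Proof. intros H. apply (ex_derive_continuous f x). apply (H 1%nat). Qed.

Lemma ex_RInt_sm f a b : smooth f -> ex_RInt f a b.
Proof. intros H. apply (@ex_RInt_continuous R_CompleteNormedModule). intros; apply smooth_cont; auto. Qed.

Lemma RInt_lower f a b c d : smooth f -> (forall x, 0 <= f x) -> a <= c -> c <= d -> d <= b ->
  (forall x, c <= x <= d -> f x = 1) -> d - c <= RInt f a b.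
Proof.
  intros Hf Hpos H1 H2 H3 H1'.
  rewrite <- (RInt_Chasles f a c b) by (apply ex_RInt_sm; auto).
  rewrite <- (RInt_Chasles f c d b) by (apply ex_RInt_sm; auto).
  rewrite (RInt_ext f (fun _ => 1) c d).
  2:{ intros x Hx. apply H1'. rewrite Rmin_left in Hx by lra. rewrite Rmax_right in Hx by lra. lra. }
  rewrite RInt_const.
  assert (0 <= RInt f a c) by (apply RInt_ge_0; auto; apply ex_RInt_sm; auto).
  assert (0 <= RInt f d b) by (apply RInt_ge_0; auto; apply ex_RInt_sm; auto).
  unfold plus, scal; simpl. unfold mult; simpl. lra.
Qed.

Lemma PP_bound s d : Hyp s d -> d / 2 <= PP s d.
Proof.
  intros H. unfold PP.
  replace (d/2) with ((d - d/4) - d/4) by field.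
  apply RInt_lower; try hyp_tac. apply pp_smooth; auto. intros; apply pp_range.
  intros x Hx. rewrite pp_id by hyp_tac. apply PL_one; hyp_tac.
Qed.

Lemma QQ_bound s d : Hyp s d -> s - 3 * d / 2 <= QQ s d.
Proof.
  intros H. unfold QQ.
  replace (s - 3 * d / 2) with ((s - d/4) - (d + d/4)) by field.
  apply RInt_lower; try hyp_tac. apply qq_smooth; auto. intros; apply qq_range.
  intros x Hx. rewrite qq_id by hyp_tac. apply PL_one; hyp_tac.
Qed.


Lemma gg_smooth s d : Hyp s d -> smooth (gg s d).
Proof.
  intros H. unfold gg. apply smooth_minus; apply smooth_scal.
  apply pp_smooth; auto. apply qq_smooth; auto.
Qed.

Lemma al_bounds s d : Hyp s d -> 0 <= al s d <= 2 * s / d - 1.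
Proof.
  intros H. assert (HP := PP_bound s d H). unfold al. destruct H as [H1 H2].
  split. apply Rmult_le_pos. lra. left; apply Rinv_0_lt_compat; lra.
  apply (Rmult_le_reg_r (PP s d)). lra. unfold Rdiv. rewrite Rmult_assoc, Rinv_l by lra.
  rewrite Rmult_1_r.
  assert (2 * s * / d - 1 = (2 * s - d) / d) by (field; lra). rewrite H.
  assert ((2 * s - d) / d * (d / 2) <= (2 * s - d) / d * PP s d).
  { apply Rmult_le_compat_l; auto. apply Rmult_le_pos. lra. left; apply Rinv_0_lt_compat; lra. }
  assert ((2 * s - d) / d * (d / 2) = s - d / 2) by (field; lra). lra.
Qed.

Lemma be_bounds s d : Hyp s d -> 0 <= be s d <= 1 - d / (2 * s).
Proof.
  intros H. assert (HQ := QQ_bound s d H). unfold be. destruct H as [H1 H2].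
  assert (HQp : 0 < QQ s d) by lra.
  split. apply Rmult_le_pos. lra. left; apply Rinv_0_lt_compat; lra.
  apply (Rmult_le_reg_r (QQ s d)). lra. unfold Rdiv. rewrite Rmult_assoc, Rinv_l by lra.
  rewrite Rmult_1_r.
  assert (0 <= 1 - d * / (2 * s)).
  { assert (d * / (2 * s) < 1). apply (Rmult_lt_reg_r (2 * s)). lra.
    rewrite Rmult_assoc, Rinv_l by lra. lra. lra. }
  assert ((1 - d * / (2 * s)) * (s - 3 * d / 2) <= (1 - d * / (2 * s)) * QQ s d)
    by (apply Rmult_le_compat_l; auto).
  assert ((1 - d * / (2 * s)) * (s - 3 * d / 2) = s - 2 * d + 3 * d * d / (4 * s)) by (field; lra).
  assert (0 <= 3 * d * d / (4 * s)).
  { apply Rmult_le_pos. nra. left; apply Rinv_0_lt_compat; lra. }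
  lra.
Qed.

Lemma uu_bounds s d x : Hyp s d -> d / (2 * s) <= uu s d x <= 2 * s / d.
Proof.
  intros H. unfold uu, gg.
  assert (Ha := al_bounds s d H). assert (Hb := be_bounds s d H).
  destruct (pp_range s d x), (qq_range s d x).
  assert (al s d * pp s d x <= al s d) by nra.
  assert (be s d * qq s d x <= be s d) by nra.
  assert (0 <= al s d * pp s d x) by nra.
  assert (0 <= be s d * qq s d x) by nra.
  assert (d / (2 * s) <= 1) by (unfold Hyp in H; apply (Rmult_le_reg_r (2 * s)); [lra|];
     unfold Rdiv; rewrite Rmult_assoc, Rinv_l by lra; lra).
  split; lra.
Qed.

Lemma aa_derive s d x : Hyp s d -> is_derive (aa s d) x (gg s d x).
Proof.
  intros H. unfold aa. apply (is_derive_RInt (gg s d) _ 0).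
  apply filter_forall. intros b. apply (RInt_correct (V := R_CompleteNormedModule)).
  apply ex_RInt_sm, gg_smooth; auto.
  apply smooth_cont, gg_smooth; auto.
Qed.

Lemma aa_diff s d x y : Hyp s d -> aa s d y - aa s d x = RInt (gg s d) x y.
Proof.
  intros H. unfold aa. rewrite <- (RInt_Chasles (gg s d) 0 x y).
  unfold plus; simpl. ring. apply ex_RInt_sm, gg_smooth; auto. apply ex_RInt_sm, gg_smooth; auto.
Qed.

Lemma RInt_gg s d a b : Hyp s d ->
  RInt (gg s d) a b = al s d * RInt (pp s d) a b - be s d * RInt (qq s d) a b.
Proof.
  intros H. unfold gg.
  rewrite (RInt_minus (V := R_CompleteNormedModule) (fun x => al s d * pp s d x) (fun x => be s d * qq s d x)).
  rewrite (RInt_scal (V := R_CompleteNormedModule) (pp s d)).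
  rewrite (RInt_scal (V := R_CompleteNormedModule) (qq s d)). reflexivity.
  apply ex_RInt_sm, qq_smooth; auto. apply ex_RInt_sm, pp_smooth; auto.
  apply ex_RInt_sm, smooth_scal, pp_smooth; auto.
  apply ex_RInt_sm, smooth_scal, qq_smooth; auto.
Qed.

Lemma RInt_zero f a b : a <= b -> (forall x, a <= x <= b -> f x = 0) -> RInt f a b = 0.
Proof.
  intros Hab H. rewrite (RInt_ext f (fun _ => 0)).
  rewrite RInt_const. unfold scal; simpl. unfold mult; simpl. ring.
  intros x Hx. rewrite Rmin_left in Hx by lra. rewrite Rmax_right in Hx by lra. apply H; lra.
Qed.

Lemma aa_d s d : Hyp s d -> aa s d d = s - 2 * d.
Proof.
  intros H. unfold aa. rewrite RInt_gg by auto.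
  rewrite (RInt_zero (qq s d)). 2: hyp_tac. 2: (intros; apply qq_zero; hyp_tac).
  fold (PP s d). unfold al. assert (H1 := PP_bound s d H).
  assert (E : (s - 2 * d) / PP s d * PP s d - be s d * 0 = s - 2 * d).
  { field. apply Rgt_not_eq. hyp_tac. }
  exact E.
Qed.

Lemma aa_s s d : Hyp s d -> aa s d s = 0.
Proof.
  intros H. unfold aa. rewrite RInt_gg by auto.
  rewrite <- (RInt_Chasles (pp s d) 0 d s) by (apply ex_RInt_sm, pp_smooth; auto).
  rewrite <- (RInt_Chasles (qq s d) 0 d s) by (apply ex_RInt_sm, qq_smooth; auto).
  rewrite (RInt_zero (pp s d) d s). 2: hyp_tac. 2: (intros; apply pp_zero; hyp_tac).
  rewrite (RInt_zero (qq s d) 0 d). 2: hyp_tac. 2: (intros; apply qq_zero; hyp_tac).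
  unfold plus; simpl. fold (PP s d) (QQ s d). unfold al, be.
  assert (H1 := PP_bound s d H). assert (H2 := QQ_bound s d H).
  assert (E : (s - 2 * d) / PP s d * (PP s d + 0) - (s - 2 * d) / QQ s d * (0 + QQ s d) = 0).
  { field. split; apply Rgt_not_eq; hyp_tac. }
  exact E.
Qed.

Lemma gg_periodic s d x : Hyp s d -> gg s d (x + s) = gg s d x.
Proof.
  intros H. unfold gg, pp, qq. rewrite !per_periodic by hyp_tac. auto.
Qed.

Lemma aa_periodic s d x : Hyp s d -> aa s d (x + s) = aa s d x.
Proof.
  intros H. unfold aa.
  rewrite <- (RInt_Chasles (gg s d) 0 s (x + s)) by (apply ex_RInt_sm, gg_smooth; auto).
  fold (aa s d s). rewrite aa_s by auto.
  assert (E1 := RInt_comp_lin (V := R_CompleteNormedModule) (gg s d) 1 s 0 x).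
  rewrite !Rmult_1_l, Rplus_0_l in E1. rewrite <- E1.
  2: apply ex_RInt_sm, gg_smooth; auto.
  unfold plus; simpl. rewrite Rplus_0_l. apply RInt_ext. intros t _.
  unfold scal; simpl; unfold mult; simpl. rewrite Rmult_1_l, gg_periodic; auto. rewrite ?Rmult_1_l; auto.
Qed.


Lemma periodic_nat (f : R -> R) s : (forall x, f (x + s) = f x) -> forall n x, f (x + s * INR n) = f x.
Proof.
  intros H n; induction n; intros x. simpl. f_equal. ring.
  rewrite S_INR. replace (x + s * (INR n + 1)) with ((x + s * INR n) + s) by ring.
  rewrite H. auto.
Qed.

Lemma periodic_Z (f : R -> R) s : (forall x, f (x + s) = f x) -> forall k x, f (x + s * IZR k) = f x.
Proof.
  intros H k x. destruct (Z_le_gt_dec 0 k).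
  - rewrite <- (Z2Nat.id k) by lia. rewrite <- INR_IZR_INZ. apply periodic_nat; auto.
  - replace k with (- Z.of_nat (Z.to_nat (- k)))%Z by lia.
    rewrite opp_IZR, <- INR_IZR_INZ.
    rewrite <- (periodic_nat f s H (Z.to_nat (- k)) (x + s * - INR (Z.to_nat (- k)))).
    f_equal. ring.
Qed.

Lemma aa_01 s d x : Hyp s d -> 0 <= x <= s -> 0 <= aa s d x <= s - 2 * d.
Proof.
  intros H Hx.
  assert (Hal := al_bounds s d H). assert (Hbe := be_bounds s d H).
  destruct (Rle_dec x d).
  - assert (Hg : forall t, 0 <= t <= d -> 0 <= gg s d t).
    { intros t Ht. unfold gg. rewrite qq_zero by hyp_tac. destruct (pp_range s d t). nra. }
    split.
    + unfold aa. apply RInt_ge_0. lra. apply ex_RInt_sm, gg_smooth; auto. intros; apply Hg; lra.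
    + rewrite <- (aa_d s d H). assert (E := aa_diff s d x d H).
      assert (0 <= RInt (gg s d) x d).
      { apply RInt_ge_0. lra. apply ex_RInt_sm, gg_smooth; auto. intros; apply Hg; lra. }
      lra.
  - assert (Hg : forall t, d <= t <= s -> gg s d t <= 0).
    { intros t Ht. unfold gg. rewrite pp_zero by hyp_tac. destruct (qq_range s d t). nra. }
    assert (Hneg : forall a b, d <= a -> a <= b -> b <= s -> RInt (gg s d) a b <= 0).
    { intros a b H1 H2 H3.
      assert (0 <= RInt (fun t => - gg s d t) a b).
      { apply RInt_ge_0. lra. apply ex_RInt_sm, smooth_opp, gg_smooth; auto.
        intros; assert (gg s d x0 <= 0) by (apply Hg; lra). lra. }
      rewrite (RInt_opp (V := R_CompleteNormedModule)) in H0.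
      unfold opp in H0; simpl in H0. lra. apply ex_RInt_sm, gg_smooth; auto. }
    split.
    + assert (E := aa_diff s d x s H). rewrite aa_s in E by auto.
      assert (RInt (gg s d) x s <= 0) by (apply Hneg; lra). lra.
    + assert (E := aa_diff s d d x H). rewrite aa_d in E by auto.
      assert (RInt (gg s d) d x <= 0) by (apply Hneg; lra). lra.
Qed.

Lemma aa_global s d x : Hyp s d -> 0 <= aa s d x <= s - 2 * d.
Proof.
  intros H. set (k := Zfloor (x / s)).
  assert (Hs : 0 < s) by hyp_tac.
  assert (Hk := floor_spec s 0 x Hs). rewrite Rminus_0_r in Hk. fold k in Hk.
  replace x with ((x - s * IZR k) + s * IZR k) by ring.
  rewrite periodic_Z. apply aa_01; auto. lra.
  intros; apply aa_periodic; auto.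
Qed.

Lemma AA_mono s d x y : Hyp s d -> x <= y -> (y - x) * (d / (2 * s)) <= AA s d y - AA s d x.
Proof.
  intros H Hxy. unfold AA.
  replace (y + aa s d y - (x + aa s d x)) with ((y - x) + (aa s d y - aa s d x)) by ring.
  rewrite aa_diff by auto.
  assert (RInt (fun _ => d / (2 * s) - 1) x y <= RInt (gg s d) x y).
  { apply RInt_le; auto. apply ex_RInt_sm, smooth_const. apply ex_RInt_sm, gg_smooth; auto.
    intros t _. assert (Hu := uu_bounds s d t H). unfold uu in Hu. lra. }
  rewrite RInt_const in H0. unfold scal in H0; simpl in H0. unfold mult in H0; simpl in H0.
  nra.
Qed.

Lemma aa_smooth s d : Hyp s d -> smooth (aa s d).
Proof.
  intros H. apply smooth_intro. intros y; eexists; apply aa_derive; auto.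
  eapply smooth_ext. 2: apply gg_smooth; eauto.
  intros x. symmetry. apply is_derive_unique, aa_derive; auto.
Qed.

Lemma AA_derive s d x : Hyp s d -> is_derive (AA s d) x (uu s d x).
Proof.
  intros H. unfold AA, uu. apply is_derive_Reals.
  apply (derivable_pt_lim_plus (fun t => t) (aa s d)).
  apply derivable_pt_lim_id. apply is_derive_Reals, aa_derive; auto.
Qed.

Lemma AA_smooth s d : Hyp s d -> smooth (AA s d).
Proof. intros H. unfold AA. apply smooth_plus. apply smooth_id. apply aa_smooth; auto. Qed.

Lemma uu_smooth s d : Hyp s d -> smooth (uu s d).
Proof. intros H. unfold uu. apply smooth_plus. apply smooth_const. apply gg_smooth; auto. Qed.

Lemma Derive_AA s d : Hyp s d -> forall x, Derive (AA s d) x = uu s d x.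
Proof. intros H x. apply is_derive_unique, AA_derive; auto. Qed.


Lemma m_pos s d : Hyp s d -> 0 < d / (2 * s).
Proof. intros H. apply Rdiv_lt_0_compat; hyp_tac. Qed.

Lemma AA_cont s d : Hyp s d -> continuity (AA s d).
Proof.
  intros H x. apply continuity_pt_filterlim.
  apply (ex_derive_continuous (AA s d) x). eexists; apply AA_derive; auto.
Qed.

Lemma AA_inj s d x y : Hyp s d -> AA s d x = AA s d y -> x = y.
Proof.
  intros H E. assert (Hm := m_pos s d H).
  destruct (Rtotal_order x y) as [Hl|[Hl|Hl]]; auto.
  - assert (Hx := AA_mono s d x y H ltac:(lra)). rewrite E in Hx. nra.
  - assert (Hx := AA_mono s d y x H ltac:(lra)). rewrite E in Hx. nra.
Qed.

Lemma AA_inv s d : Hyp s d -> {h : R -> R | (forall y, AA s d (h y) = y) /\ forall x, h (AA s d x) = x}.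
Proof.
  intros H.
  assert (Hc : forall y, continuity (fun x => AA s d x - y)).
  { intros y. apply continuity_minus. apply AA_cont; auto. apply continuity_const. intros ? ?; auto. }
  assert (Hp : forall y, (AA s d (y - s) - y) * (AA s d y - y) <= 0).
  { intros y. unfold AA. assert (H1 := aa_global s d (y - s) H). assert (H2 := aa_global s d y H).
    assert (y - s + aa s d (y - s) - y <= 0) by hyp_tac.
    assert (0 <= y + aa s d y - y) by lra. nra. }
  assert (Hle : forall y, y - s <= y) by (intros; hyp_tac).
  exists (fun y => proj1_sig (IVT_cor _ (y - s) y (Hc y) (Hle y) (Hp y))).
  assert (HA : forall y, AA s d (proj1_sig (IVT_cor _ (y - s) y (Hc y) (Hle y) (Hp y))) = y).
  { assert (G : forall y (p : {z | y - s <= z <= y /\ AA s d z - y = 0}), AA s d (proj1_sig p) = y)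
      by (intros y [z [Hz1 Hz]]; simpl; lra).
    intros y. apply G. }
  split. auto.
  intros x. apply (AA_inj s d); auto.
Qed.


Lemma h_mono (s d : R) (h : R -> R) (H : Hyp s d) (Hh1 : forall y, AA s d (h y) = y) y1 y2 : y1 <= y2 -> h y1 <= h y2.
Proof.
  intros Hy. destruct (Rle_dec (h y1) (h y2)); auto.
  assert (Hx := AA_mono s d (h y2) (h y1) H ltac:(lra)). rewrite !Hh1 in Hx.
  assert (Hm := m_pos s d H). nra.
Qed.

Lemma h_lip0 (s d : R) (h : R -> R) (H : Hyp s d) (Hh1 : forall y, AA s d (h y) = y) y1 y2 : y1 <= y2 -> Rabs (h y1 - h y2) <= Rabs (y1 - y2) * (2 * s / d).
Proof.
  intros Hy. assert (Hm := m_pos s d H).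
  assert (E : 2 * s / d = / (d / (2 * s))) by (field; split; hyp_tac).
  rewrite E.
  assert (Hx := AA_mono s d (h y1) (h y2) H (h_mono s d h H Hh1 _ _ Hy)). rewrite !Hh1 in Hx.
  assert (h y1 <= h y2) by (apply (h_mono s d h H Hh1); auto).
  rewrite Rabs_minus_sym, Rabs_right by lra. rewrite Rabs_minus_sym, Rabs_right by lra.
  apply (Rmult_le_reg_r (d / (2 * s))); auto. rewrite Rmult_assoc, Rinv_l by lra. lra.
Qed.

Lemma h_lip (s d : R) (h : R -> R) (H : Hyp s d) (Hh1 : forall y, AA s d (h y) = y) y1 y2 : Rabs (h y1 - h y2) <= Rabs (y1 - y2) * (2 * s / d).
Proof.
  destruct (Rle_dec y1 y2). apply (h_lip0 s d h H Hh1); auto.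
  rewrite Rabs_minus_sym, (Rabs_minus_sym y1). apply (h_lip0 s d h H Hh1). lra.
Qed.

Lemma h_cont (s d : R) (h : R -> R) (H : Hyp s d) (Hh1 : forall y, AA s d (h y) = y) y : continuity_pt h y.
Proof.
  unfold continuity_pt, continue_in, limit1_in, limit_in. simpl. unfold R_dist.
  intros eps Heps. assert (Hm := m_pos s d H).
  exists (eps * (d / (2 * s))). split. nra.
  intros x [_ Hx]. eapply Rle_lt_trans. apply (h_lip s d h H Hh1).
  assert (E : 2 * s / d = / (d / (2 * s))) by (field; split; hyp_tac).
  rewrite E. apply (Rmult_lt_reg_r (d / (2 * s))); auto. rewrite Rmult_assoc, Rinv_l by lra. lra.
Qed.

Lemma h_derive (s d : R) (h : R -> R) (H : Hyp s d) (Hh1 : forall y, AA s d (h y) = y) y : is_derive h y (/ uu s d (h y)).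
Proof.
  assert (Prf : forall a, h (y - 1) <= a <= h (y + 1) -> derivable_pt (AA s d) a).
  { intros a _. exists (uu s d a). apply is_derive_Reals, AA_derive; auto. }
  assert (Hincr : h (y - 1) <= h y <= h (y + 1)) by (split; apply (h_mono s d h H Hh1); lra).
  assert (Hu := uu_bounds s d (h y) H). assert (Hm := m_pos s d H).
  assert (D := derivable_pt_lim_recip_interv (AA s d) h (y - 1) (y + 1) y Prf (h_cont s d h H Hh1 y)
     ltac:(lra) ltac:(lra) Hincr).
  apply is_derive_Reals.
  replace (/ uu s d (h y)) with (1 / derive_pt (AA s d) (h y) (Prf (h y) Hincr)).
  apply D. intros; unfold comp, id; auto.
  - rewrite (derive_pt_eq_0 _ _ (uu s d (h y))). lra. apply is_derive_Reals, AA_derive; auto.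
  - rewrite (derive_pt_eq_0 _ _ (uu s d (h y))). field. lra. apply is_derive_Reals, AA_derive; auto.
Qed.


Definition rr s d x := / uu s d x.

Fixpoint Qf (r : R -> R) (i : nat) : R -> R :=
  match i with O => r | S i => fun z => Derive (Qf r i) z * r z end.

Lemma Qf_smooth r : smooth r -> forall i, smooth (Qf r i).
Proof.
  intros Hr i. induction i; simpl; auto. apply smooth_mult; auto. apply smooth_derive; auto.
Qed.

Lemma uu_nz s d x : Hyp s d -> uu s d x <> 0.
Proof. intros H. assert (H1 := uu_bounds s d x H). assert (H2 := m_pos s d H). lra. Qed.

Lemma rr_smooth s d : Hyp s d -> smooth (rr s d).
Proof. intros H. apply smooth_inv. intros; apply uu_nz; auto. apply uu_smooth; auto. Qed.

Lemma rr_ode s d : Hyp s d -> forall t, Derive (rr s d) t = - (Derive (uu s d) t * (rr s d t * rr s d t)).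
Proof.
  intros H t. unfold rr. rewrite Derive_inv. field. apply uu_nz; auto.
  apply (uu_smooth s d H 1%nat). apply uu_nz; auto.
Qed.


Lemma h_Dn (s d : R) (h : R -> R) (H : Hyp s d) (Hh1 : forall y, AA s d (h y) = y) i : forall y, Derive_n h (S i) y = Qf (rr s d) i (h y) /\ ex_derive_n h (S i) y.
Proof.
  assert (Hd := h_derive s d h H Hh1).
  induction i as [|i IH]; intros y.
  - simpl. split. apply is_derive_unique. apply Hd. eexists; apply Hd.
  - assert (E : forall t, Derive_n h (S i) t = Qf (rr s d) i (h t)) by (intros; apply IH).
    assert (Hc : is_derive (fun t => Qf (rr s d) i (h t)) y
                  (Derive (Qf (rr s d) i) (h y) * rr s d (h y))).
    { eapply is_derive_ext. intros t; reflexivity.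
      assert (G := is_derive_comp (Qf (rr s d) i) h y _ _
        (Derive_correct _ _ (Qf_smooth _ (rr_smooth s d H) i 1%nat (h y))) (Hd y)).
      unfold scal in G; simpl in G; unfold mult in G; simpl in G.
      rewrite Rmult_comm. exact G. }
    split.
    + change (Derive (Derive_n h (S i)) y = Qf (rr s d) (S i) (h y)).
      rewrite (Derive_ext _ _ y E). apply is_derive_unique. exact Hc.
    + change (ex_derive (Derive_n h (S i)) y).
      eapply ex_derive_ext. intros t; symmetry; apply E. eexists; exact Hc.
Qed.

Lemma h_smooth (s d : R) (h : R -> R) (H : Hyp s d) (Hh1 : forall y, AA s d (h y) = y) : smooth h.
Proof. intros n y. destruct n. exact I. apply (h_Dn s d h H Hh1). Qed.


Lemma inv8 d : 0 < d -> / (d / 8) = 8 * / d.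
Proof. intros. field. lra. Qed.

Lemma pq_bound n : exists C, 0 <= C /\ forall s d x j, Hyp s d -> (j <= n)%nat ->
  Rabs (Derive_n (pp s d) j x) <= C * (8 * / d) ^ j /\
  Rabs (Derive_n (qq s d) j x) <= C * (8 * / d) ^ j.
Proof.
  destruct (PL_bound n) as [C [HC HCb]]. exists C. split; auto.
  intros s d x j H Hj. split.
  - destruct (per_deriv s (-d/16) 0 d (Bp d)) with (x := x) as [z Hz]; try hyp_tac.
    intros; apply Bp_lo; hyp_tac. intros; apply Bp_hi; hyp_tac.
    unfold pp. rewrite Hz. rewrite <- inv8 by hyp_tac. apply HCb; auto. hyp_tac.
  - destruct (per_deriv s (-d/16) (d + d/8) (s - d/8) (Bq s d)) with (x := x) as [z Hz]; try hyp_tac.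
    intros; apply Bq_lo; hyp_tac. intros; apply Bq_hi; hyp_tac.
    unfold qq. rewrite Hz. rewrite <- inv8 by hyp_tac. apply HCb; auto. hyp_tac.
Qed.

Lemma Dn_zero_loc f x : locally x (fun t => f t = 0) -> forall j, Derive_n f j x = 0.
Proof.
  intros Hl j. rewrite (Derive_n_ext_loc f (fun _ => 0)); auto.
  destruct j. reflexivity. apply Derive_n_const.
Qed.

Lemma pq_case s d x : Hyp s d ->
  (forall j, Derive_n (qq s d) j x = 0) \/ (forall j, Derive_n (pp s d) j x = 0).
Proof.
  intros H. assert (Hs : 0 < s) by hyp_tac.
  set (e := - d / 16). set (k := Zfloor ((x - e) / s)).
  assert (Hx := floor_spec s e x Hs). fold k in Hx.
  assert (Hrep : forall c0 d0 B t, e < c0 -> c0 <= d0 -> d0 < e + s ->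
    (forall z, z <= c0 -> B z = 0) -> (forall z, d0 <= z -> B z = 0) ->
    d0 + s * (IZR k - 1) < t -> t < e + s * (IZR k + 1) -> per s e B t = B (t - s * IZR k)).
  { intros c0 d0 B t H1 H2 H3 H4 H5 H6 H7. apply (per_rep0 s e c0 d0 B x t); auto. }
  clearbody k.
  destruct (Rle_dec (x - s * IZR k) (d + d / 16)).
  - left. apply Dn_zero_loc.
    apply (locally_interval _ x ((s - d/8) + s * (IZR k - 1)) (s * IZR k + (d + d/8))); simpl.
    unfold e in Hx; hyp_tac. hyp_tac.
    intros t Ht1 Ht2. unfold qq. fold e.
    rewrite (Hrep (d + d/8) (s - d/8) (Bq s d) t); unfold e in *; try hyp_tac.
    apply Bq_lo; hyp_tac. intros; apply Bq_lo; hyp_tac. intros; apply Bq_hi; hyp_tac.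
  - right. apply Dn_zero_loc.
    apply (locally_interval _ x (s * IZR k + d) (e + s * (IZR k + 1))); simpl.
    hyp_tac. unfold e in *; hyp_tac.
    intros t Ht1 Ht2. unfold pp. fold e.
    rewrite (Hrep 0 d (Bp d) t); unfold e in *; try hyp_tac.
    apply Bp_hi; hyp_tac. intros; apply Bp_lo; hyp_tac. intros; apply Bp_hi; hyp_tac.
Qed.

Lemma uu_Dn s d j x : Hyp s d -> (1 <= j)%nat ->
  Derive_n (uu s d) j x = al s d * Derive_n (pp s d) j x - be s d * Derive_n (qq s d) j x.
Proof.
  intros H Hj. unfold uu.
  rewrite Derive_n_plus. 2: apply smooth_loc, smooth_const. 2: apply smooth_loc, gg_smooth; auto.
  rewrite Derive_n_const_all by auto. rewrite Rplus_0_l.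
  unfold gg. rewrite Derive_n_minus.
  2: apply smooth_loc, smooth_scal, pp_smooth; auto.
  2: apply smooth_loc, smooth_scal, qq_smooth; auto.
  rewrite !Derive_n_scal_l. auto.
Qed.

Lemma L_ge2 s d : Hyp s d -> s <= 1 -> 2 <= / d.
Proof.
  intros H Hs. replace 2 with (/ (/ 2)) by (field).
  apply Rinv_le_contravar. hyp_tac. hyp_tac.
Qed.

Lemma al_L s d : Hyp s d -> s <= 1 -> al s d <= 2 * / d.
Proof.
  intros H Hs. assert (Ha := al_bounds s d H).
  assert (2 * s / d <= 2 * / d).
  { unfold Rdiv. assert (0 < / d) by (apply Rinv_0_lt_compat; hyp_tac). nra. }
  lra.
Qed.

Lemma uu_L s d x : Hyp s d -> s <= 1 -> Rabs (uu s d x) <= 2 * / d.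
Proof.
  intros H Hs. assert (Hu := uu_bounds s d x H). assert (Hm := m_pos s d H).
  rewrite Rabs_right by lra.
  assert (2 * s / d <= 2 * / d).
  { unfold Rdiv. assert (0 < / d) by (apply Rinv_0_lt_compat; hyp_tac). nra. }
  lra.
Qed.

Lemma rr_L s d x : Hyp s d -> s <= 1 -> Rabs (rr s d x) <= 2 * / d.
Proof.
  intros H Hs. assert (Hu := uu_bounds s d x H). assert (Hm := m_pos s d H).
  unfold rr. rewrite Rabs_right by (left; apply Rinv_0_lt_compat; lra).
  assert (/ uu s d x <= / (d / (2 * s))) by (apply Rinv_le_contravar; lra).
  assert (/ (d / (2 * s)) = 2 * s * / d) by (field; hyp_tac).
  assert (0 < / d) by (apply Rinv_0_lt_compat; hyp_tac). nra.
Qed.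

Lemma pow_mul_le (L : R) a b : 1 <= L -> (a <= b)%nat -> L ^ a <= L ^ b.
Proof. intros. apply Rle_pow; auto. Qed.

Lemma rr_bound k : exists C, 0 <= C /\ forall s d z j, Hyp s d -> s <= 1 -> (j <= k)%nat ->
  Rabs (Derive_n (rr s d) j z) <= C * (/ d * / d) ^ j * (2 * / d).
Proof.
  destruct (pq_bound (S k)) as [Cp [HCp HCpb]].
  set (K := 16 * Cp * 8 ^ k).
  assert (HK : 0 <= K) by (unfold K; apply Rmult_le_pos; [lra|apply pow_le; lra]).
  destruct (recip_bound k K HK) as [C [HC HCb]].
  exists C. split. lra.
  intros s d z j H Hs Hj.
  assert (HL := L_ge2 s d H Hs). set (L := / d) in *.
  assert (HM : 0 <= L * L) by nra.
  assert (Hal := al_L s d H Hs). assert (Hbe := be_bounds s d H). fold L in Hal.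
  assert (Hal0 := al_bounds s d H).
  assert (Hpow : forall i, (i <= k)%nat -> 2 * 8 ^ S i <= 16 * 8 ^ k).
  { intros i Hi. simpl. assert (8 ^ i <= 8 ^ k) by (apply pow_mul_le; lra || lia). lra. }
  assert (HLp : forall i, 0 <= L ^ i) by (intros; apply pow_le; lra).
  assert (H8p : forall i, 0 <= 8 ^ i) by (intros; apply pow_le; lra).
  assert (HLL : forall i, L ^ i * L = L ^ S i) by (intros; simpl; ring).
  assert (HLsq : forall i, (L * L) ^ i = L ^ (2 * i)) by (intros; rewrite pow_mult; simpl; f_equal; ring).
  assert (HD : forall i, Derive_n (Derive (uu s d)) i z =
     al s d * Derive_n (pp s d) (S i) z - be s d * Derive_n (qq s d) (S i) z).
  { intros i. rewrite <- Derive_n_S. apply uu_Dn; auto. lia. }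
  assert (Hpq : forall i, (i <= k)%nat ->
    Rabs (Derive_n (pp s d) (S i) z) <= Cp * 8 ^ S i * L ^ S i /\
    Rabs (Derive_n (qq s d) (S i) z) <= Cp * 8 ^ S i * L ^ S i).
  { intros i Hi. destruct (HCpb s d z (S i) H ltac:(lia)) as [A1 A2].
    rewrite Rpow_mult_distr in A1, A2. fold L in A1, A2. split; lra. }
  destruct (pq_case s d z H) as [Hq|Hp].
  -
    assert (Hr : Rabs (rr s d z) <= 1).
    { unfold rr. assert (Hq0 := Hq 0%nat). simpl in Hq0.
      unfold uu, gg. rewrite Hq0. destruct (pp_range s d z).
      assert (1 <= 1 + (al s d * pp s d z - be s d * 0)) by nra.
      rewrite Rabs_right. rewrite <- Rinv_1. apply Rinv_le_contravar; lra.
      left; apply Rinv_0_lt_compat; lra. }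
    assert (B := HCb (uu s d) (rr s d) z (L * L) (L * L) 1 (uu_smooth s d H) (rr_smooth s d H)
      (rr_ode s d H) HM ltac:(lra) ltac:(lra)).
    eapply Rle_trans. apply B; auto.
    + intros i Hi. rewrite HD, Hq, Rmult_0_r, Rminus_0_r, Rabs_mult, Rabs_right by lra.
      destruct (Hpq i Hi) as [P1 _].
      eapply Rle_trans. apply Rmult_le_compat; try lra. apply Rabs_pos. apply Hal. apply P1.
      rewrite HLsq. unfold K.
      assert (L ^ S i * L <= L ^ (2 * i) * (L * L)).
      { rewrite HLL. replace (L ^ (2 * i) * (L * L)) with (L ^ (S (S (2 * i)))) by (simpl; ring).
        apply pow_mul_le; lra || lia. }
      assert (Hpi := Hpow i Hi).
      assert (0 <= Cp * L ^ S i * L) by (apply Rmult_le_pos; [apply Rmult_le_pos|]; auto; lra).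
      replace (2 * L * (Cp * 8 ^ S i * L ^ S i)) with ((2 * 8 ^ S i) * (Cp * L ^ S i * L)) by ring.
      replace (16 * Cp * 8 ^ k * L ^ (2 * i) * (L * L)) with ((16 * 8 ^ k) * (Cp * (L ^ (2 * i) * (L * L)))) by ring.
      apply Rmult_le_compat; auto. apply Rmult_le_pos; auto; lra.
      rewrite Rmult_assoc. apply Rmult_le_compat_l; auto.
    + assert (0 <= (L * L) ^ j) by (apply pow_le; auto).
      assert (0 <= C * (L * L) ^ j) by (apply Rmult_le_pos; lra).
      rewrite Rmult_1_r. assert (C * (L * L) ^ j * 1 <= C * (L * L) ^ j * (2 * L)) by (apply Rmult_le_compat_l; lra). lra.
  -
    assert (Hr := rr_L s d z H Hs). fold L in Hr.
    assert (B := HCb (uu s d) (rr s d) z (L * L) L (2 * L) (uu_smooth s d H) (rr_smooth s d H)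
      (rr_ode s d H) HM ltac:(lra) ltac:(lra)).
    apply B; auto.
    intros i Hi. rewrite HD, Hp, Rmult_0_r, Rminus_0_l, Rabs_Ropp, Rabs_mult, (Rabs_right (be s d)) by lra.
    destruct (Hpq i Hi) as [_ P2]. assert (Hm := m_pos s d H).
    eapply Rle_trans. apply (Rmult_le_compat _ 1); try lra. apply Rabs_pos. apply P2.
    rewrite HLsq. unfold K.
    assert (L ^ S i <= L ^ (2 * i) * L).
    { rewrite HLL. apply pow_mul_le; lra || lia. }
    assert (Hpi := Hpow i Hi).
    assert (0 <= Cp * L ^ S i) by (apply Rmult_le_pos; auto).
    assert (H3 : 1 * (Cp * 8 ^ S i * L ^ S i) <= (2 * 8 ^ S i) * (Cp * L ^ S i)).
    { assert (0 <= 8 ^ S i * (Cp * L ^ S i)) by (apply Rmult_le_pos; auto). nra. }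
    eapply Rle_trans. apply H3.
    replace (16 * Cp * 8 ^ k * L ^ (2 * i) * L) with ((16 * 8 ^ k) * (Cp * (L ^ (2 * i) * L))) by ring.
    apply Rmult_le_compat; auto. apply Rmult_le_pos; auto; lra.
    apply Rmult_le_compat_l; auto.
Qed.


Lemma Qbound i : forall k Cr, 0 <= Cr -> exists C, 0 <= C /\
  forall r M X z, smooth r -> 0 <= M -> 0 <= X ->
  (forall j, (j <= k + i)%nat -> Rabs (Derive_n r j z) <= Cr * M ^ j * X) ->
  forall j, (j <= k)%nat -> Rabs (Derive_n (Qf r i) j z) <= C * M ^ j * ((M * X) ^ i * X).
Proof.
  induction i as [|i IH]; intros k Cr HCr.
  - exists Cr. split; auto. intros r M X z Hr HM HX Hb j Hj. simpl.
    rewrite Rmult_1_l. apply Hb. lia.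
  - destruct (IH (S k) Cr HCr) as [Ci [HCi HCib]].
    exists (2 ^ k * Ci * Cr). split. { apply Rmult_le_pos; auto. apply Rmult_le_pos; auto. apply pow_le; lra. }
    intros r M X z Hr HM HX Hb j Hj. simpl Qf.
    assert (HQ := HCib r M X z Hr HM HX ltac:(intros; apply Hb; lia)).
    eapply Rle_trans.
    apply (prod_bound j (Derive (Qf r i)) r z Ci Cr M (M * ((M * X) ^ i * X)) X).
    apply smooth_derive, Qf_smooth; auto. auto.
    + intros j' Hj'. rewrite <- Derive_n_S.
      replace (Ci * M ^ j' * (M * ((M * X) ^ i * X))) with (Ci * M ^ (S j') * ((M * X) ^ i * X)) by (simpl; ring).
      apply HQ. lia.
    + intros j' Hj'. apply Hb. lia.
    + assert (2 ^ j <= 2 ^ k) by (apply pow_mul_le; lra || lia).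
      assert (0 <= (M * X) ^ i) by (apply pow_le; nra).
      assert (0 <= Ci * Cr * M ^ j * (M * ((M * X) ^ i * X)) * X).
      { repeat apply Rmult_le_pos; auto; apply pow_le; auto. }
      replace (2 ^ j * Ci * Cr * M ^ j * (M * ((M * X) ^ i * X)) * X) with
        (2 ^ j * (Ci * Cr * M ^ j * (M * ((M * X) ^ i * X)) * X)) by ring.
      replace (2 ^ k * Ci * Cr * M ^ j * ((M * X) ^ S i * X)) with
        (2 ^ k * (Ci * Cr * M ^ j * (M * ((M * X) ^ i * X)) * X)) by (simpl; ring).
      apply Rmult_le_compat_r; auto.
Qed.

Lemma bound_i i : exists rho, 0 <= rho /\ forall s d h x, Hyp s d -> s <= 1 ->
  (forall y, AA s d (h y) = y) -> 0 <= x <= 1 -> 0 <= AA s d x <= 1 -> 0 <= h x <= 1 ->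
  Rabs (Derive_n (AA s d) i x) <= rho * (/ d) ^ (i * i) /\
  Rabs (Derive_n h i x) <= rho * (/ d) ^ (i * i).
Proof.
  destruct i as [|m].
  - exists 1. split. lra. intros s d h x H Hs Hh Hx HA Hhx. simpl.
    rewrite !Rabs_right by lra. lra.
  - destruct (pq_bound m) as [Cp [HCp HCpb]].
    destruct (rr_bound m) as [Cr [HCr HCrb]].
    destruct (Qbound m 0 Cr HCr) as [CQ [HCQ HCQb]].
    exists (2 + 3 * Cp * 8 ^ m + CQ * 2 ^ (S m)). split.
    { assert (0 <= 3 * Cp * 8 ^ m) by (apply Rmult_le_pos; [lra|apply pow_le; lra]).
      assert (0 <= CQ * 2 ^ (S m)) by (apply Rmult_le_pos; [lra|apply pow_le; lra]). lra. }
    intros s d h x H Hs Hh Hx HA Hhx.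
    assert (HL := L_ge2 s d H Hs). set (L := / d) in *.
    assert (HLp : forall i, 0 <= L ^ i) by (intros; apply pow_le; lra).
    assert (Hpos1 : 0 <= 3 * Cp * 8 ^ m) by (apply Rmult_le_pos; [lra|apply pow_le; lra]).
    assert (Hpos2 : 0 <= CQ * 2 ^ (S m)) by (apply Rmult_le_pos; [lra|apply pow_le; lra]).
    assert (HLsq : L ^ S m <= L ^ (S m * S m)) by (apply pow_mul_le; lra || nia).
    split.
    + rewrite Derive_n_S, (Derive_n_ext _ (uu s d)) by (apply Derive_AA; auto).
      assert (Hb : Rabs (Derive_n (uu s d) m x) <= (2 + 3 * Cp * 8 ^ m) * L ^ S m).
      { destruct m as [|m'].
        - simpl. assert (Hu := uu_L s d x H Hs). fold L in Hu. nra.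
        - rewrite uu_Dn by (auto; lia).
          destruct (HCpb s d x (S m') H (le_n _)) as [P1 P2].
          rewrite Rpow_mult_distr in P1, P2. fold L in P1, P2.
          assert (Hal := al_L s d H Hs). assert (Hal0 := al_bounds s d H). fold L in Hal.
          assert (Hbe := be_bounds s d H). assert (Hm := m_pos s d H).
          eapply Rle_trans. apply Rabs_triang. rewrite Rabs_Ropp, !Rabs_mult.
          rewrite (Rabs_right (al s d)), (Rabs_right (be s d)) by lra.
          assert (al s d * Rabs (Derive_n (pp s d) (S m') x) <= 2 * L * (Cp * 8 ^ S m' * L ^ S m'))
            by (apply Rmult_le_compat; try lra; apply Rabs_pos).
          assert (be s d * Rabs (Derive_n (qq s d) (S m') x) <= 1 * (Cp * 8 ^ S m' * L ^ S m'))
            by (apply Rmult_le_compat; try lra; apply Rabs_pos).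
          assert (0 <= Cp * 8 ^ S m' * L ^ S m') by (apply Rmult_le_pos; [apply Rmult_le_pos|]; auto; try apply pow_le; lra).
          assert (L ^ S (S m') = L * L ^ S m') by (simpl; ring).
          assert (1 <= L ^ S (S m')) by (apply pow_R1_Rle; lra).
          assert (Cp * 8 ^ S m' * L ^ S m' <= Cp * 8 ^ S m' * L ^ S (S m')).
          { apply Rmult_le_compat_l. apply Rmult_le_pos; auto; apply pow_le; lra.
            apply pow_mul_le; lra || lia. }
          nra. }
      eapply Rle_trans. apply Hb.
      assert (0 <= L ^ S m) by auto.
      assert ((2 + 3 * Cp * 8 ^ m) * L ^ S m <= (2 + 3 * Cp * 8 ^ m) * L ^ (S m * S m))
        by (apply Rmult_le_compat_l; lra).
      assert (0 <= CQ * 2 ^ S m * L ^ (S m * S m)) by (apply Rmult_le_pos; auto).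
      nra.
    + destruct (h_Dn s d h H Hh m x) as [E _]. rewrite E.
      assert (Hb := HCQb (rr s d) (L * L) (2 * L) (h x) (rr_smooth s d H) ltac:(nra) ltac:(lra)).
      assert (HQ := Hb ltac:(intros j Hj; apply HCrb; auto; lia) 0%nat (le_n _)).
      simpl pow at 1 in HQ. rewrite Rmult_1_r in HQ.
      eapply Rle_trans. apply HQ.
      assert (E2 : (L * L * (2 * L)) ^ m * (2 * L) = 2 ^ S m * L ^ (3 * m + 1)).
      { assert (G : forall n, (L * L * (2 * L)) ^ n = 2 ^ n * L ^ (3 * n)).
        { induction n. simpl. ring. replace (3 * S n)%nat with (3 + 3 * n)%nat by lia.
          rewrite pow_add. simpl pow at 1. rewrite IHn. simpl. ring. }
        rewrite G, pow_add. simpl. ring. }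
      rewrite E2.
      assert (L ^ (3 * m + 1) <= L ^ (S m * S m)) by (apply pow_mul_le; lra || nia).
      assert (0 <= 2 ^ S m) by (apply pow_le; lra).
      assert (CQ * (2 ^ S m * L ^ (3 * m + 1)) <= CQ * 2 ^ S m * L ^ (S m * S m)).
      { rewrite <- Rmult_assoc. apply Rmult_le_compat_l; auto. }
      assert (0 <= (2 + 3 * Cp * 8 ^ m) * L ^ (S m * S m)) by (apply Rmult_le_pos; auto; lra).
      nra.
Qed.


Lemma bound_le n : exists rho, 0 <= rho /\ forall i s d h x, (i <= n)%nat -> Hyp s d -> s <= 1 ->
  (forall y, AA s d (h y) = y) -> 0 <= x <= 1 -> 0 <= AA s d x <= 1 -> 0 <= h x <= 1 ->
  Rabs (Derive_n (AA s d) i x) <= rho * (/ d) ^ (n * n) /\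
  Rabs (Derive_n h i x) <= rho * (/ d) ^ (n * n).
Proof.
  induction n as [|n [r [Hr IH]]].
  - destruct (bound_i 0) as [r [Hr B]]. exists r. split; auto.
    intros i s d h x Hi. replace i with 0%nat by lia. apply B.
  - destruct (bound_i (S n)) as [r' [Hr' B]]. exists (r + r'). split. lra.
    intros i s d h x Hi H Hs Hh Hx HA Hhx.
    assert (HL := L_ge2 s d H Hs).
    assert (Hmono : forall a b, (a <= b)%nat -> (/ d) ^ a <= (/ d) ^ b) by (intros; apply pow_mul_le; lra || lia).
    assert (Hp : forall a, 0 <= (/ d) ^ a) by (intros; apply pow_le; lra).
    destruct (Nat.eq_dec i (S n)) as [E|E].
    + subst i. destruct (B s d h x H Hs Hh Hx HA Hhx) as [B1 B2].
      assert (0 <= r * (/ d) ^ (S n * S n)) by (apply Rmult_le_pos; auto).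
      split; nra.
    + destruct (IH i s d h x ltac:(lia) H Hs Hh Hx HA Hhx) as [B1 B2].
      assert (Hm := Hmono (n * n)%nat (S n * S n)%nat ltac:(nia)).
      assert (r * (/ d) ^ (n * n) <= r * (/ d) ^ (S n * S n)) by (apply Rmult_le_compat_l; auto).
      assert (0 <= r' * (/ d) ^ (S n * S n)) by (apply Rmult_le_pos; auto).
      split; nra.
Qed.

Lemma bound_n n : exists rho : R, forall s d h, Hyp s d -> s <= 1 ->
  (forall y, AA s d (h y) = y) -> (forall x, 0 <= x <= 1 -> 0 <= AA s d x <= 1) ->
  (forall x, 0 <= x <= 1 -> 0 <= h x <= 1) ->
  Cn_le n (AA s d) h (rho / d ^ (n * n)).
Proof.
  destruct (bound_le n) as [r [Hr B]]. exists r.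
  intros s d h H Hs Hh HA Hhx.
  assert (E : r / d ^ (n * n) = r * (/ d) ^ (n * n)).
  { unfold Rdiv. rewrite pow_inv. auto. }
  rewrite E. split; intros i x Hi Hx; apply (B i s d h x Hi H Hs Hh Hx (HA x Hx) (Hhx x Hx)).
Qed.


Theorem lemma3p3 :
  exists rho : nat -> R,
  forall s delta : R,
    0 < s -> 0 < delta ->
    (exists N : nat, s * INR N = 1) ->
    delta < s / 2 ->
    exists (A Ainv a : R -> R),
      diffeo01 A Ainv /\
      (* (1) *)
      (forall x, A x = x + a x) /\ smooth a /\ (forall x, 0 <= a x) /\
      periodic a s /\
      (* (2) *)
      A 0 = 0 /\ A delta = s - delta /\ A s = s /\
      (* (3) *)
      (forall x, delta / (2 * s) <= Derive A x <= 2 * s / delta) /\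
      (* (4) *)
      (forall n : nat, Cn_le n A Ainv (rho n / delta ^ (n * n))).
Proof.
  exists (fun n => proj1_sig (constructive_indefinite_description _ (bound_n n))).
  intros s d Hs Hd [N HN] Hsd.
  assert (H : Hyp s d) by (split; lra).
  assert (HN1 : 1 <= INR N).
  { destruct N. simpl in HN. lra. rewrite S_INR. assert (0 <= INR N) by apply pos_INR. lra. }
  assert (Hs1 : s <= 1).
  { assert (s * 1 <= s * INR N) by (apply Rmult_le_compat_l; lra). lra. }
  destruct (AA_inv s d H) as [h [Hh1 Hh2]].
  assert (HA0 : AA s d 0 = 0).
  { unfold AA, aa. rewrite RInt_point. unfold zero; simpl. ring. }
  assert (HA1 : AA s d 1 = 1).
  { unfold AA. rewrite <- HN.
    rewrite <- (Rplus_0_l (s * INR N)) at 2.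
    rewrite (periodic_nat (aa s d) s (fun x => aa_periodic s d x H) N 0).
    unfold aa. rewrite RInt_point. unfold zero; simpl. ring. }
  assert (HAr : forall x, 0 <= x <= 1 -> 0 <= AA s d x <= 1).
  { intros x Hx. assert (Hm := m_pos s d H).
    assert (H1 := AA_mono s d 0 x H ltac:(lra)). assert (H2 := AA_mono s d x 1 H ltac:(lra)).
    split; nra. }
  assert (Hhr : forall x, 0 <= x <= 1 -> 0 <= h x <= 1).
  { intros x Hx. assert (h 0 = 0) by (assert (E := Hh2 0); rewrite HA0 in E; exact E).
    assert (h 1 = 1) by (assert (E := Hh2 1); rewrite HA1 in E; exact E).
    assert (h 0 <= h x) by (apply (h_mono s d h H Hh1); lra).
    assert (h x <= h 1) by (apply (h_mono s d h H Hh1); lra). lra. }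
  exists (AA s d), h, (aa s d).
  split; [|split; [|split; [|split; [|split; [|split; [|split; [|split; [|split]]]]]]]].
  - split. apply AA_smooth; auto. split. apply (h_smooth s d h H Hh1).
    split. auto. split. auto. split; auto.
  - intros; reflexivity.
  - apply aa_smooth; auto.
  - intros x; apply aa_global; auto.
  - intros x; apply aa_periodic; auto.
  - auto.
  - unfold AA. rewrite aa_d by auto. ring.
  - unfold AA. rewrite aa_s by auto. ring.
  - intros x. rewrite Derive_AA by auto. apply uu_bounds; auto.
  - intros n. destruct (constructive_indefinite_description _ (bound_n n)) as [r Hr]. simpl.
    apply Hr; auto.
Qed.
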